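(* Let $H$ be a Hopf algebra over $\mathbb C$ with comultiplication $\Delta$, counit $\epsilon$ and antipode $S$, and let $G$ be a finite subgroup of the group $G(H)$ of group-like elements of $H$ contained in the center of $H$. Let $\omega$ be a normalized $3$-cocycle on $G$ with values in $\mathbb C^\times$ and $j\colon G\to\hat G$ a group isomorphism. Then $H_{(G,\omega,j)}=(H,\Delta,\epsilon,\phi,\alpha,\beta,S)$ with $$\phi=\sum_{x,y,z\in G}\omega(x,y,z)^{-1}e_x\otimes e_y\otimes e_z,\qquad \alpha=1,\qquad\beta=\sum_{x\in G}\omega(x,x^{-1},x)e_x$$ is a quasi-Hopf algebra. Moreover, if $\omega'$ is a normalized $3$-cocycle cohomologous to $\omega$, then $H_{(G,\omega,j)}$ and $H_{(G,\omega',j)}$ are gauge equivalent quasi-Hopf algebras.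
   Context: $\hat G$ is the group of linear characters $G\to\mathbb C^\times$. For $x\in G$, $e_x=\frac{1}{|G|}\sum_{y\in G}j(y)(x)^{-1}y\in\mathbb C[G]\subseteq H$. A quasi-Hopf algebra is $(H,\Delta,\epsilon,\phi,\alpha,\beta,S)$ with $\Delta,\epsilon$ algebra maps, $\phi$ invertible satisfying the pentagon identity and $(\mathrm{id}\otimes\epsilon\otimes\mathrm{id})(\phi)=1\otimes1$, counit axioms, $\phi(\Delta\otimes\mathrm{id})\Delta(h)=(\mathrm{id}\otimes\Delta)\Delta(h)\phi$, $S$ an anti-algebra automorphism, $S(h_{(1)})\alpha h_{(2)}=\epsilon(h)\alpha$, $h_{(1)}\beta S(h_{(2)})=\epsilon(h)\beta$, $\phi^{(1)}\beta S(\phi^{(2)})\alpha\phi^{(3)}=1$, $S(\phi^{(-1)})\alpha\phi^{(-2)}\beta S(\phi^{(-3)})=1$. Gauge equivalence: $A$ and $B$ are gauge equivalent if $A\cong B^F$ as quasi-bialgebras for some gauge transformation $F$ on $B$ (invertible $F\in B\otimes B$ with $(\epsilon\otimes\mathrm{id})(F)=1=(\mathrm{id}\otimes\epsilon)(F)$, $\Delta^F=F\Delta F^{-1}$, $\phi^F=(1\otimes F)(\mathrm{id}\otimes\Delta)(F)\phi(\Delta\otimes\mathrm{id})(F^{-1})(F^{-1}\otimes1)$). A $3$-cocycle is normalized if it equals $1$ whenever an argument is $1$. *)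

(* Defs.v *)
From HB Require Import structures.
From mathcomp Require Import all_boot all_order all_algebra all_fingroup.
From mathcomp Require Import complex Rstruct.
Set Implicit Arguments.
Unset Strict Implicit.
Unset Printing Implicit Defensive.
Import GRing.Theory.
Local Open Scope ring_scope.

Notation C := (Rdefinitions.R)[i].

(* An element of H (x) H is represented by a finite list of pure tensors     *)
(* [(a_1,b_1); ...] (meaning sum_i a_i (x) b_i); two representatives are     *)
(* identified (teq2) iff they agree under every pairing with f (x) g for     *)
(* C-linear functionals f, g on H.  Over a field, H* (x) H* separates the    *)
(* points of H (x) H, so teq2 is exactly equality in H (x) H.  Same for the  *)
(* third and fourth tensor powers.                                           *)
Section Tensors.
Variable H : algType C.

Definition lin_fun (f : H -> C) :=
  forall (a : C) (u v : H), f (a *: u + v) = a * f u + f v.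

Definition T2 := seq (H * H).
Definition T3 := seq (H * H * H).
Definition T4 := seq (H * H * H * H).

Definition ev2 (f g : H -> C) (s : T2) : C := \sum_(p <- s) f p.1 * g p.2.
Definition ev3 (f g k : H -> C) (s : T3) : C :=
  \sum_(p <- s) f p.1.1 * g p.1.2 * k p.2.
Definition ev4 (f g k l : H -> C) (s : T4) : C :=
  \sum_(p <- s) f p.1.1.1 * g p.1.1.2 * k p.1.2 * l p.2.

Definition teq2 (s t : T2) := forall f g, lin_fun f -> lin_fun g ->
  ev2 f g s = ev2 f g t.
Definition teq3 (s t : T3) := forall f g k, lin_fun f -> lin_fun g -> lin_fun k ->
  ev3 f g k s = ev3 f g k t.
Definition teq4 (s t : T4) := forall f g k l,
  lin_fun f -> lin_fun g -> lin_fun k -> lin_fun l ->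
  ev4 f g k l s = ev4 f g k l t.

Definition one2 : T2 := [:: (1, 1)].
Definition one3 : T3 := [:: (1, 1, 1)].
Definition one4 : T4 := [:: (1, 1, 1, 1)].
Definition mul2 (s t : T2) : T2 := [seq (p.1 * q.1, p.2 * q.2) | p <- s, q <- t].
Definition mul3 (s t : T3) : T3 :=
  [seq (p.1.1 * q.1.1, p.1.2 * q.1.2, p.2 * q.2) | p <- s, q <- t].
Definition mul4 (s t : T4) : T4 :=
  [seq (p.1.1.1 * q.1.1.1, p.1.1.2 * q.1.1.2, p.1.2 * q.1.2, p.2 * q.2)
  | p <- s, q <- t].
Definition scale2 (a : C) (s : T2) : T2 := [seq (a *: p.1, p.2) | p <- s].

Variable D : H -> T2.
Variable eps : H -> C.

Definition D_id (s : T2) : T3 := [seq (q.1, q.2, p.2) | p <- s, q <- D p.1].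
Definition id_D (s : T2) : T3 := [seq (p.1, q.1, q.2) | p <- s, q <- D p.2].
Definition D_id_id (s : T3) : T4 :=
  [seq (q.1, q.2, p.1.2, p.2) | p <- s, q <- D p.1.1].
Definition id_D_id (s : T3) : T4 :=
  [seq (p.1.1, q.1, q.2, p.2) | p <- s, q <- D p.1.2].
Definition id_id_D (s : T3) : T4 :=
  [seq (p.1.1, p.1.2, q.1, q.2) | p <- s, q <- D p.2].
Definition t2_one (s : T2) : T3 := [seq (p.1, p.2, 1) | p <- s].
Definition one_t2 (s : T2) : T3 := [seq (1, p.1, p.2) | p <- s].
Definition t3_one (s : T3) : T4 := [seq (p.1.1, p.1.2, p.2, 1) | p <- s].
Definition one_t3 (s : T3) : T4 := [seq (1, p.1.1, p.1.2, p.2) | p <- s].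
Definition eps_id (s : T2) : H := \sum_(p <- s) eps p.1 *: p.2.
Definition id_eps (s : T2) : H := \sum_(p <- s) eps p.2 *: p.1.
Definition id_eps_id (s : T3) : T2 := [seq (eps p.1.2 *: p.1.1, p.2) | p <- s].

Definition algebra_maps :=
  [/\ (forall a u v, teq2 (D (a *: u + v)) (scale2 a (D u) ++ D v)),
      (forall u v, teq2 (D (u * v)) (mul2 (D u) (D v))) &
      teq2 (D 1) one2] /\
  [/\ (forall a u v, eps (a *: u + v) = a * eps u + eps v),
      (forall u v, eps (u * v) = eps u * eps v) & eps 1 = 1].

Definition counit_axioms := forall h, eps_id (D h) = h /\ id_eps (D h) = h.

Definition inverse3 (phi psi : T3) := teq3 (mul3 phi psi) one3 /\ teq3 (mul3 psi phi) one3.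
Definition inverse2 (F G : T2) := teq2 (mul2 F G) one2 /\ teq2 (mul2 G F) one2.

Definition quasi_bialgebra (phi : T3) :=
  algebra_maps /\
  [/\ (exists psi, inverse3 phi psi),
      teq4 (mul4 (mul4 (one_t3 phi) (id_D_id phi)) (t3_one phi))
           (mul4 (id_id_D phi) (D_id_id phi)),
      teq2 (id_eps_id phi) one2,
      counit_axioms &
      forall h, teq3 (mul3 phi (D_id (D h))) (mul3 (id_D (D h)) phi)].

Definition anti_alg_automorphism (S : H -> H) :=
  [/\ (forall (a : C) u v, S (a *: u + v) = a *: S u + S v),
      (forall u v, S (u * v) = S v * S u), S 1 = 1 & bijective S].

Definition quasi_hopf (phi : T3) (alpha beta : H) (S : H -> H) :=
  [/\ quasi_bialgebra phi, anti_alg_automorphism S &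
      (forall h, \sum_(p <- D h) S p.1 * alpha * p.2 = eps h *: alpha)] /\
  [/\       (forall h, \sum_(p <- D h) p.1 * beta * S p.2 = eps h *: beta),
      \sum_(p <- phi) p.1.1 * beta * S p.1.2 * alpha * p.2 = 1 &
      forall psi, inverse3 phi psi ->
        \sum_(p <- psi) S p.1.1 * alpha * p.1.2 * beta * S p.2 = 1].

Definition hopf_algebra (S : H -> H) :=
  [/\ algebra_maps,
      (forall h, teq3 (D_id (D h)) (id_D (D h))) &
      counit_axioms] /\
  [/\ (forall (a : C) u v, S (a *: u + v) = a *: S u + S v),
      (forall h, \sum_(p <- D h) S p.1 * p.2 = (eps h)%:A),
      (forall h, \sum_(p <- D h) p.1 * S p.2 = (eps h)%:A) &
      bijective S].

Definition gauge_transformation (F Finv : T2) :=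
  [/\ inverse2 F Finv, eps_id F = 1 & id_eps F = 1].
Definition twist_D (F Finv : T2) (h : H) : T2 := mul2 (mul2 F (D h)) Finv.
Definition twist_phi (F Finv : T2) (phi : T3) : T3 :=
  mul3 (mul3 (mul3 (mul3 (one_t2 F) (id_D F)) phi) (D_id Finv)) (t2_one Finv).

Definition group_like (g : H) := g != 0 /\ teq2 (D g) [:: (g, g)].
End Tensors.

Arguments teq2 {H}. Arguments teq3 {H}.

Definition map2 (A B : algType C) (f : A -> B) (s : T2 A) : T2 B :=
  [seq (f p.1, f p.2) | p <- s].
Definition map3 (A B : algType C) (f : A -> B) (s : T3 A) : T3 B :=
  [seq (f p.1.1, f p.1.2, f p.2) | p <- s].

Definition qbialg_iso (A B : algType C)
  (DA : A -> T2 A) (epsA : A -> C) (phiA : T3 A)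
  (DB : B -> T2 B) (epsB : B -> C) (phiB : T3 B) (f : A -> B) :=
  [/\ (forall (a : C) u v, f (a *: u + v) = a *: f u + f v),
      (forall u v, f (u * v) = f u * f v), f 1 = 1 & bijective f] /\
  [/\ (forall h, teq2 (map2 f (DA h)) (DB (f h))),
      (forall h, epsB (f h) = epsA h) &
      teq3 (map3 f phiA) phiB].

Definition gauge_equivalent (A B : algType C)
  (DA : A -> T2 A) (epsA : A -> C) (phiA : T3 A)
  (DB : B -> T2 B) (epsB : B -> C) (phiB : T3 B) :=
  exists (F Finv : T2 B) (f : A -> B),
    gauge_transformation epsB F Finv /\
    qbialg_iso DA epsA phiA (twist_D DB F Finv) epsB (twist_phi DB F Finv phiB) f.

Section Groups.
Variable gT : finGroupType.

Definition central_grouplike_subgroup (H : algType C) (D : H -> T2 H)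
  (iota : gT -> H) :=
  [/\ injective iota, iota 1%g = 1,
      (forall x y, iota (x * y)%g = iota x * iota y),
      (forall x, group_like D (iota x)) &
      forall x h, iota x * h = h * iota x].

Definition normalized_3cocycle (w : gT -> gT -> gT -> C) :=
  [/\ (forall x y z, w x y z != 0),
      (forall x y z t,
        w y z t * w x (y * z)%g t * w x y z = w (x * y)%g z t * w x y (z * t)%g) &
      forall x y, [/\ w 1%g x y = 1, w x 1%g y = 1 & w x y 1%g = 1]].

Definition cohomologous (w w' : gT -> gT -> gT -> C) :=
  exists rho : gT -> gT -> C, (forall x y, rho x y != 0) /\
    forall x y z, w' x y z =
      w x y z * (rho y z * rho x (y * z)%g) / (rho (x * y)%g z * rho x y).

Definition lin_char (chi : gT -> C) :=
  (forall x, chi x != 0) /\ forall x y, chi (x * y)%g = chi x * chi y.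

Definition char_iso (j : gT -> gT -> C) :=
  [/\ (forall x, lin_char (j x)),
      (forall x y z, j (x * y)%g z = j x z * j y z),
      injective j &
      forall chi, lin_char chi -> exists x, j x = chi].

Variable H : algType C.
Variable iota : gT -> H.
Variable j : gT -> gT -> C.

Definition idem (x : gT) : H :=
  (#|gT|%:R)^-1 *: \sum_(y : gT) ((j y x)^-1 *: iota y).

Definition qphi (w : gT -> gT -> gT -> C) : T3 H :=
  flatten [seq [seq ((w x y z)^-1 *: idem x, idem y, idem z)
               | y <- enum gT, z <- enum gT] | x <- enum gT].

Definition qbeta (w : gT -> gT -> gT -> C) : H :=
  \sum_(x : gT) w x x^-1%g x *: idem x.
End Groups.

(* Main.v *)
Require Import Defs.
From HB Require Import structures.
From mathcomp Require Import all_boot all_order all_algebra all_fingroup.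
From mathcomp Require Import complex Rstruct.
From mathcomp Require Import ring.
From mathcomp Require classical_sets boolp.
From Stdlib Require Import FunctionalExtensionality Classical.
Set Implicit Arguments.
Unset Strict Implicit.
Unset Printing Implicit Defensive.
Import GRing.Theory Num.Theory.
Local Open Scope ring_scope.


Section Ext.
Variable V : lmodType C.
Definition closedV (X : V -> Prop) := forall (a : C) u v, X u -> X v -> X (a *: u + v).

Lemma ext_fun (P0 : V -> Prop) (y : V) :
  P0 0 -> closedV P0 -> ~ P0 y ->
  exists g : V -> C, (forall (a : C) u v, g (a *: u + v) = a * g u + g v) /\
     (forall p, P0 p -> g p = 0) /\ g y = 1.
Proof.
move=> P00 P0c P0y.
pose P (Q : V -> Prop) := closedV (fun v => Q v \/ P0 v) /\ ~ (Q y \/ P0 y).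
have [A [[Ac Ay] Amax]] : exists A, P A /\ forall B, classical_sets.proper A B -> ~ P B.
  apply: classical_sets.Zorn_bigcup => F FP Ftot.
  have mem : forall u, (classical_sets.bigcup F id u \/ P0 u) ->
      exists X, (F X \/ X = (fun _ => False)) /\ (X u \/ P0 u).
    move=> u [[X FX Xu]|P0u]; first by exists X; split; [left|left].
    by exists (fun _ => False); split; [right|right].
  have PX : forall X, F X \/ X = (fun _ => False) -> P X.
    move=> X [/FP //|->]; split; last by case.
    by move=> a u v [[]|Pu] [[]|Pv]; right; apply: P0c.
  have sub : forall X, F X \/ X = (fun _ => False) -> forall u, X u ->
      classical_sets.bigcup F id u.
    by move=> X [FX|->] u Xu //; exists X.
  split.
    move=> a u v /mem [X [FX Xu]] /mem [Y [FY Yv]].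
    have [Z [FZ [XZ YZ]]] : exists Z, (F Z \/ Z = (fun _ => False)) /\
        (forall t, X t \/ P0 t -> Z t \/ P0 t) /\ (forall t, Y t \/ P0 t -> Z t \/ P0 t).
      case: FX => [FX|EX]; case: FY => [FY|EY].
      - have [XY|YX] := Ftot _ _ FX FY.
          exists Y; split; first by left.
          by split=> t // [/XY|]; auto.
        exists X; split; first by left.
        by split=> t // [/YX|]; auto.
      - exists X; split; first by left.
        by split=> t // [|]; rewrite ?EY; auto; case.
      - exists Y; split; first by left.
        by split=> t // [|]; rewrite ?EX; auto; case.
      - exists X; split; first by right.
        by split=> t // [|]; rewrite ?EX ?EY; auto.
    have [Zc _] := PX _ FZ.
    have [] := Zc a u v (XZ _ Xu) (YZ _ Yv) => H; last by right.
    by left; apply: sub H.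
  move=> [[X FX Xy]|//].
  by have [_ []] := FP X FX; left.
pose Q v := A v \/ P0 v.
have Q0 : Q 0 by right.
have Qc : closedV Q by [].
have QN : forall u, Q u -> forall c, Q (c *: u).
  by move=> u Qu c; rewrite -[c *: u]addr0; apply: Qc.
have dec : forall z, exists c, exists q, Q q /\ z = q + c *: y.
  move=> z; case: (classic (Q z)) => Qz.
    by exists 0, z; rewrite scale0r addr0.
  pose B v := exists q c, Q q /\ v = q + c *: z.
  have BQ : forall v, Q v -> B v by move=> v Qv; exists v, 0; rewrite scale0r addr0.
  have BP0 : forall v, P0 v -> B v by move=> v Pv; apply: BQ; right.
  have notPB : ~ P B.
    apply: Amax; split; first by move=> v Av; apply: BQ; left.
    move=> BA; apply: Qz; left; apply: BA; exists 0, 1; rewrite scale1r add0r; split=> //.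
  case: (classic (B y)) => By.
    case: By => q [c [Qq Ey]].
    case: (eqVneq c 0) => [c0|cn0].
      by exfalso; apply: Ay; rewrite Ey c0 scale0r addr0.
    exists c^-1, (- c^-1 *: q); split; first exact: QN.
    by rewrite Ey scalerDr scalerA mulVf // scale1r scaleNr addrA addNr add0r.
  exfalso; apply: notPB; split.
    move=> a u v [[q1 [c1 [Q1 ->]]]|/BP0 [q1 [c1 [Q1 ->]]]]
                 [[q2 [c2 [Q2 ->]]]|/BP0 [q2 [c2 [Q2 ->]]]];
    left; exists (a *: q1 + q2), (a * c1 + c2); (split; first exact: Qc);
    by rewrite scalerDr scalerDl scalerA addrACA.
  by case=> // /BP0.
have uniq : forall q1 q2 c1 c2, Q q1 -> Q q2 -> q1 + c1 *: y = q2 + c2 *: y -> c1 = c2.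
  move=> q1 q2 c1 c2 Q1 Q2 E; apply/eqP; case: (eqVneq c1 c2) => // /eqP ne; exfalso.
  have ne' : c1 - c2 != 0 by rewrite subr_eq0; apply/eqP.
  have : y = (c1 - c2)^-1 *: q2 + (- (c1 - c2)^-1) *: q1.
    apply: (@scalerI _ _ (c1 - c2)) => //.
    rewrite scalerDr !scalerA mulrN mulfV // scaleN1r scale1r.
    rewrite scalerBl.
    have -> : c1 *: y = q2 + c2 *: y - q1 by rewrite -E addrC addKr.
    by rewrite addrAC addrK.
  move=> Ey; apply: Ay; rewrite Ey; apply: Qc => //; exact: QN.
pose g z := proj1_sig (boolp.constructive_indefinite_description (dec z)).
have gP : forall z, exists q, Q q /\ z = q + g z *: y.
  by move=> z; rewrite /g; case: boolp.constructive_indefinite_description.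
have gE : forall z q c, Q q -> z = q + c *: y -> g z = c.
  move=> z q c Qq Ez; have [q' [Qq' E']] := gP z.
  by apply: (uniq q' q) => //; rewrite -E' -Ez.
exists g; split.
  move=> a u v; have [qu [Qu Eu]] := gP u; have [qv [Qv Ev]] := gP v.
  apply: (gE _ (a *: qu + qv)); first exact: Qc.
  by rewrite {1}Eu {1}Ev scalerDr scalerDl scalerA addrACA.
split.
  by move=> p P0p; apply: (gE _ p); [right|rewrite scale0r addr0].
by apply: (gE _ 0) => //; rewrite add0r scale1r.
Qed.
End Ext.


Definition linV (V W : lmodType C) (f : V -> W) :=
  forall (a : C) u v, f (a *: u + v) = a *: f u + f v.
Definition linC (V : lmodType C) (f : V -> C) :=
  forall (a : C) u v, f (a *: u + v) = a * f u + f v.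

Section LinLemmas.
Variables (V W : lmodType C).

Lemma linV0 (f : V -> W) : linV f -> f 0 = 0.
Proof.
move=> lf; have := lf 1 0 0; rewrite !scale1r addr0 => E.
by apply: (@addrI _ (f 0)); rewrite addr0 -E.
Qed.

Lemma linVZ (f : V -> W) a u : linV f -> f (a *: u) = a *: f u.
Proof. by move=> lf; rewrite -[a *: u]addr0 lf linV0 // addr0. Qed.

Lemma linVD (f : V -> W) u v : linV f -> f (u + v) = f u + f v.
Proof. by move=> lf; rewrite -[u]scale1r lf !scale1r. Qed.

Lemma linVB (f : V -> W) u v : linV f -> f (u - v) = f u - f v.
Proof. by move=> lf; rewrite linVD // -scaleN1r linVZ // scaleN1r. Qed.

Lemma linV_sum (f : V -> W) I (r : seq I) (F : I -> V) : linV f ->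
  f (\sum_(i <- r) F i) = \sum_(i <- r) f (F i).
Proof.
move=> lf; elim: r => [|i r IH]; first by rewrite !big_nil linV0.
by rewrite !big_cons linVD // IH.
Qed.

Lemma linC0 (f : V -> C) : linC f -> f 0 = 0.
Proof.
move=> lf; have := lf 1 0 0; rewrite scale1r addr0 mul1r => E.
by apply: (@addrI _ (f 0)); rewrite addr0 -E.
Qed.

Lemma linCZ (f : V -> C) a u : linC f -> f (a *: u) = a * f u.
Proof. by move=> lf; rewrite -[a *: u]addr0 lf linC0 // addr0. Qed.

Lemma linCD (f : V -> C) u v : linC f -> f (u + v) = f u + f v.
Proof. by move=> lf; rewrite -[u]scale1r lf scale1r mul1r. Qed.

Lemma linC_sum (f : V -> C) I (r : seq I) (F : I -> V) : linC f ->
  f (\sum_(i <- r) F i) = \sum_(i <- r) f (F i).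
Proof.
move=> lf; elim: r => [|i r IH]; first by rewrite !big_nil linC0.
by rewrite !big_cons linCD // IH.
Qed.
End LinLemmas.

Lemma eq_big_In (R : Type) (idx : R) (op : R -> R -> R) I (r : seq I) (F G : I -> R) :
  (forall i, List.In i r -> F i = G i) -> \big[op/idx]_(i <- r) F i = \big[op/idx]_(i <- r) G i.
Proof.
elim: r => [|i r IH] E; first by rewrite !big_nil.
rewrite !big_cons E; last by left.
by rewrite IH // => k Hk; apply: E; right.
Qed.

Section Proj.
Variable V : lmodType C.
Definition piV (r : seq ((V -> C) * V)) (w : V) := \sum_(l <- r) l.1 w *: l.2.

Lemma piV_lin r : (forall l, List.In l r -> linC l.1) -> linV (piV r).
Proof.
rewrite /piV; elim: r => [|l r IH] Hr a u v.
  by rewrite !big_nil scaler0 addr0.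
rewrite !big_cons IH; last by move=> l' Hl'; apply: Hr; right.
rewrite (Hr l); last by left.
  by rewrite scalerDl scalerDr scalerA addrACA.
Qed.

Lemma proj (vs : seq V) : exists r : seq ((V -> C) * V),
  [/\ (forall l, List.In l r -> linC l.1),
      (forall l, List.In l r -> piV r l.2 = l.2) &
      (forall v, List.In v vs -> piV r v = v)].
Proof.
elim: vs => [|x vs [r [Hl Hu Hv]]].
  by exists [::]; split.
have lp := piV_lin Hl.
have idem : forall w, piV r (piV r w) = piV r w.
  move=> w; transitivity (piV r (\sum_(l <- r) l.1 w *: l.2)); first by [].
  rewrite linV_sum //.
  by apply: eq_big_In => l Hlr; rewrite linVZ // Hu.
case: (eqVneq (piV r x) x) => [Ex|Nx].
  by exists r; split => // v [<-|]; auto.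
pose y := x - piV r x.
have piy : piV r y = 0.
  by rewrite /y linVB // idem subrr.
have [g [lg [g0 gy]]] : exists g : V -> C, linC g /\ (forall p, piV r p = p -> g p = 0) /\ g y = 1.
  apply: ext_fun; first exact: linV0.
    by move=> a u v Pu Pv; rewrite lp Pu Pv.
  move=> Py; have y0 : y = 0 by rewrite -Py piy.
  by move: Nx; rewrite eq_sym -subr_eq0 -/y y0 eqxx.
have pi' : forall w, piV ((g, y) :: r) w = g w *: y + piV r w.
  by move=> w; rewrite /piV big_cons.
exists ((g, y) :: r); split.
- by move=> l [<-|]; [exact: lg|exact: Hl].
- move=> l [<-|Hlr] /=; first by rewrite pi' gy scale1r piy addr0.
  by rewrite pi' g0 ?Hu // scale0r add0r.
- move=> v [<-|Hvs]; last by rewrite pi' g0 ?Hv // scale0r add0r.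
  rewrite pi'; have -> : g x = 1.
    have -> : x = 1 *: y + piV r x by rewrite scale1r /y subrK.
    by rewrite lg gy (g0 (piV r x)) ?idem // mulr1 addr0.
  by rewrite scale1r /y subrK.
Qed.
End Proj.

Section Sep.
Variables (H : algType C) (W : lmodType C).

Definition bilin (B : H -> H -> W) :=
  (forall b, linV (fun a : H => B a b)) /\ (forall a, linV (B a)).
Definition trilin (T : H -> H -> H -> W) :=
  [/\ (forall b c, linV (fun a : H => T a b c)), (forall a c, linV (fun b : H => T a b c))
    & (forall a b, linV (T a b))].

Lemma piV_expand (r : seq ((H -> C) * H)) (f : H -> W) a :
  linV f -> piV r a = a -> f a = \sum_(l <- r) l.1 a *: f l.2.
Proof.
move=> lf Ea; rewrite -{1}Ea /piV linV_sum //.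
by apply: eq_bigr => l _; rewrite linVZ.
Qed.

Lemma expand2 r (B : H -> H -> W) a b : bilin B -> piV r a = a -> piV r b = b ->
  B a b = \sum_(l <- r) \sum_(m <- r) (l.1 a * m.1 b) *: B l.2 m.2.
Proof.
move=> [B1 B2] Ea Eb; rewrite (piV_expand (r := r) (f := fun a => B a b)) //.
apply: eq_bigr => l _; rewrite (piV_expand (r := r) (f := B l.2)) // scaler_sumr.
by apply: eq_bigr => m _; rewrite scalerA.
Qed.

Lemma expand3 r (T : H -> H -> H -> W) a b c : trilin T ->
  piV r a = a -> piV r b = b -> piV r c = c ->
  T a b c = \sum_(l <- r) \sum_(m <- r) \sum_(n <- r)
     (l.1 a * m.1 b * n.1 c) *: T l.2 m.2 n.2.
Proof.
move=> [T1 T2 T3] Ea Eb Ec; rewrite (piV_expand (r := r) (f := fun a => T a b c)) //.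
apply: eq_bigr => l _; rewrite (piV_expand (r := r) (f := fun b => T l.2 b c)) // scaler_sumr.
apply: eq_bigr => m _; rewrite (piV_expand (r := r) (f := T l.2 m.2)) // !scaler_sumr.
by apply: eq_bigr => n _; rewrite !scalerA.
Qed.

Lemma sepsum2 r (s : T2 H) (B : H -> H -> W) : bilin B ->
  (forall p, List.In p s -> piV r p.1 = p.1 /\ piV r p.2 = p.2) ->
  \sum_(p <- s) B p.1 p.2 =
  \sum_(l <- r) \sum_(m <- r) ev2 l.1 m.1 s *: B l.2 m.2.
Proof.
move=> bB Hs; transitivity (\sum_(p <- s) \sum_(l <- r) \sum_(m <- r)
   (l.1 p.1 * m.1 p.2) *: B l.2 m.2).
  by apply: eq_big_In => p /Hs [E1 E2]; apply: expand2.
rewrite exchange_big; apply: eq_bigr => l _.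
rewrite exchange_big; apply: eq_bigr => m _.
by rewrite /ev2 scaler_suml.
Qed.

Lemma sepsum3 r (s : T3 H) (T : H -> H -> H -> W) : trilin T ->
  (forall p, List.In p s -> [/\ piV r p.1.1 = p.1.1, piV r p.1.2 = p.1.2 & piV r p.2 = p.2]) ->
  \sum_(p <- s) T p.1.1 p.1.2 p.2 =
  \sum_(l <- r) \sum_(m <- r) \sum_(n <- r) ev3 l.1 m.1 n.1 s *: T l.2 m.2 n.2.
Proof.
move=> bT Hs; transitivity (\sum_(p <- s) \sum_(l <- r) \sum_(m <- r) \sum_(n <- r)
   (l.1 p.1.1 * m.1 p.1.2 * n.1 p.2) *: T l.2 m.2 n.2).
  by apply: eq_big_In => p /Hs [E1 E2 E3]; apply: expand3.
rewrite exchange_big; apply: eq_bigr => l _.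
rewrite exchange_big; apply: eq_bigr => m _.
rewrite exchange_big; apply: eq_bigr => n _.
by rewrite /ev3 scaler_suml.
Qed.

Lemma sep2 (s t : T2 H) (B : H -> H -> W) : teq2 s t -> bilin B ->
  \sum_(p <- s) B p.1 p.2 = \sum_(p <- t) B p.1 p.2.
Proof.
move=> st bB.
have [r [Hl _ Hv]] := proj (map fst s ++ map snd s ++ map fst t ++ map snd t).
rewrite (sepsum2 (r := r)) //; last first.
  move=> p Hp; split; apply: Hv; rewrite !List.in_app_iff;
  [left|right; left]; exact: List.in_map.
rewrite (sepsum2 (r := r) (s := t)) //; last first.
  move=> p Hp; split; apply: Hv; rewrite !List.in_app_iff;
  [right; right; left|right; right; right]; exact: List.in_map.
apply: eq_big_In => l Hlr; apply: eq_big_In => m Hmr.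
by rewrite st //; [exact: Hl|exact: Hl].
Qed.

Lemma sep3 (s t : T3 H) (T : H -> H -> H -> W) : teq3 s t -> trilin T ->
  \sum_(p <- s) T p.1.1 p.1.2 p.2 = \sum_(p <- t) T p.1.1 p.1.2 p.2.
Proof.
move=> st bT.
have [r [Hl _ Hv]] := proj (map (fun p => p.1.1) s ++ map (fun p => p.1.2) s ++
  map snd s ++ map (fun p => p.1.1) t ++ map (fun p => p.1.2) t ++ map snd t).
rewrite (sepsum3 (r := r)) //; last first.
  move=> p Hp; split; apply: Hv; rewrite !List.in_app_iff;
  [left|right; left|right; right; left]; exact: (List.in_map (fun p => _)).
rewrite (sepsum3 (r := r) (s := t)) //; last first.
  move=> p Hp; split; apply: Hv; rewrite !List.in_app_iff;
  [right; right; right; left|right; right; right; right; left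
  |right; right; right; right; right]; exact: (List.in_map (fun p => _)).
apply: eq_big_In => l Hlr; apply: eq_big_In => m Hmr; apply: eq_big_In => n Hnr.
by rewrite st //; exact: Hl.
Qed.
End Sep.


Section Chars.
Variables (gT : finGroupType) (j : gT -> gT -> C).
Hypothesis hj : char_iso j.

Definition NG : C := (#|gT|)%:R.

Lemma NG_neq0 : NG != 0.
Proof. by rewrite /NG pnatr_eq0 -lt0n; apply/card_gt0P; exists 1%g. Qed.

Lemma chi1 (chi : gT -> C) : lin_char chi -> chi 1%g = 1.
Proof.
move=> [nz M]; have := M 1%g 1%g; rewrite mulg1 => E.
by apply: (mulfI (nz 1%g)); rewrite -E mulr1.
Qed.

Lemma chiV (chi : gT -> C) x : lin_char chi -> chi x^-1%g = (chi x)^-1.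
Proof.
move=> hc; have [nz M] := hc; apply: (mulfI (nz x)).
by rewrite -M mulgV chi1 // mulfV.
Qed.

Lemma jx1 y : j y 1%g = 1.
Proof. by case: hj => lc _ _ _; apply: chi1. Qed.

Lemma jM y x z : j y (x * z)%g = j y x * j y z.
Proof. by case: hj => lc _ _ _; case: (lc y). Qed.

Lemma jV y x : j y x^-1%g = (j y x)^-1.
Proof. by case: hj => lc _ _ _; apply: chiV. Qed.

Lemma jnz y x : j y x != 0.
Proof. by case: hj => lc _ _ _; case: (lc y). Qed.

Lemma j1 x : j 1%g x = 1.
Proof.
case: hj => _ Ml _ _; have := Ml 1%g 1%g x; rewrite mulg1 => E.
by apply: (mulfI (jnz 1%g x)); rewrite -E mulr1.
Qed.

Lemma jMl y y' x : j (y * y')%g x = j y x * j y' x.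
Proof. by case: hj => _ Ml _ _. Qed.

Lemma jVl y x : j y^-1%g x = (j y x)^-1.
Proof.
apply: (mulfI (jnz y x)); by rewrite -jMl mulgV j1 mulfV // jnz.
Qed.

Lemma row_sum y : \sum_x j y x = if y == 1%g then NG else 0.
Proof.
case: eqP => [->|ne].
  by rewrite (eq_bigr (fun _ => 1)) => [|x _]; [rewrite sumr_const|rewrite j1].
have [x0 nx0] : exists x0, j y x0 != 1.
  apply: NNPP => Hn; apply: ne; case: hj => _ _ inj _; apply: inj.
  apply: functional_extensionality => x; rewrite j1.
  by apply/eqP; apply: NNPP => /negP Hx; apply: Hn; exists x.
have E : \sum_x j y x = j y x0 * \sum_x j y x.
  rewrite {1}(reindex_inj (mulgI x0)) /= mulr_sumr.
  by apply: eq_bigr => x _; rewrite jM.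
apply/eqP; have : (1 - j y x0) * \sum_x j y x == 0.
  by rewrite mulrBl mul1r -E subrr.
by rewrite mulf_eq0 subr_eq0 eq_sym (negbTE nx0).
Qed.
End Chars.

Section Orth.
Variables (gT : finGroupType) (j : gT -> gT -> C).
Hypothesis hj : char_iso j.

Lemma orth_row y y' : \sum_x j y x * (j y' x)^-1 = if y == y' then NG gT else 0.
Proof.
rewrite (eq_bigr (fun x => j (y * y'^-1)%g x)); last first.
  by move=> x _; rewrite jMl // jVl.
by rewrite row_sum // -eq_mulgV1.
Qed.

Lemma orth_col x x' : \sum_y (j y x)^-1 * j y x' = if x == x' then NG gT else 0.
Proof.
pose n := #|gT|.
pose A := \matrix_(i < n, k < n) j (enum_val i) (enum_val k).
pose B := \matrix_(k < n, i < n) ((NG gT)^-1 * (j (enum_val i) (enum_val k))^-1).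
have AB : A *m B = 1%:M.
  apply/matrixP => i i'; rewrite !mxE.
  transitivity ((NG gT)^-1 * \sum_x j (enum_val i) x * (j (enum_val i') x)^-1).
    rewrite mulr_sumr (big_enum_val (A := gT)) /=.
    by apply: eq_bigr => k _; rewrite !mxE mulrCA.
  rewrite orth_row // (inj_eq enum_val_inj).
  by case: eqP => _; rewrite ?mulr0 // mulVf // NG_neq0.
have BA := mulmx1C AB.
move/matrixP: BA => /(_ (enum_rank x) (enum_rank x')); rewrite !mxE.
rewrite (inj_eq enum_rank_inj) => E.
have E2 : (NG gT)^-1 * \sum_y (j y x)^-1 * j y x' = (x == x')%:R.
  rewrite -E mulr_sumr (big_enum_val (A := gT)) /=.
  by apply: eq_bigr => k _; rewrite !mxE !enum_rankK mulrA.
apply: (mulfI (invr_neq0 (NG_neq0 gT))); rewrite E2.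
by case: eqP => _; rewrite ?mulr0 // mulVf // NG_neq0.
Qed.
End Orth.


Section Hopf.
Variables (H : algType C) (D : H -> T2 H) (eps : H -> C) (S : H -> H).
Hypothesis Dlin : forall a u v, teq2 (D (a *: u + v)) (scale2 a (D u) ++ D v).
Hypothesis Dmul : forall u v, teq2 (D (u * v)) (mul2 (D u) (D v)).
Hypothesis D1 : teq2 (D 1) (one2 H).
Hypothesis epsL : forall a u v, eps (a *: u + v) = a * eps u + eps v.
Hypothesis epsM : forall u v, eps (u * v) = eps u * eps v.
Hypothesis eps1 : eps 1 = 1.
Hypothesis coass : forall h, teq3 (D_id D (D h)) (id_D D (D h)).
Hypothesis counit : forall h, eps_id eps (D h) = h /\ id_eps eps (D h) = h.
Hypothesis SL : forall (a : C) u v, S (a *: u + v) = a *: S u + S v.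
Hypothesis antiL : forall h, \sum_(p <- D h) S p.1 * p.2 = (eps h)%:A.
Hypothesis antiR : forall h, \sum_(p <- D h) p.1 * S p.2 = (eps h)%:A.

Lemma epsC : linC eps. Proof. exact: epsL. Qed.
Lemma SV : linV S. Proof. exact: SL. Qed.

Lemma evD_lin f g : lin_fun f -> lin_fun g -> linC (fun u => ev2 f g (D u)).
Proof.
move=> lf lg a u v /=; rewrite (Dlin a u v lf lg) /ev2 big_cat big_map /= mulr_sumr.
congr (_ + _); apply: eq_bigr => p _; rewrite (linCZ _ _ lf) mulrA //.
Qed.

Definition sumD (W : lmodType C) (B : H -> H -> W) u := \sum_(p <- D u) B p.1 p.2.

Lemma sumD_lin (W : lmodType C) (B : H -> H -> W) : bilin B -> linV (sumD B).
Proof.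
move=> bB a u v; rewrite /sumD (sep2 (Dlin a u v) bB) big_cat big_map /= scaler_sumr.
congr (_ + _); apply: eq_bigr => p _; rewrite (linVZ _ _ (bB.1 _)) //.
Qed.

Lemma bilin_Sm : bilin (fun a b : H => S a * b).
Proof.
split=> [b|a] x u v /=; first by rewrite SL mulrDl scalerAl.
by rewrite mulrDr scalerAr.
Qed.

Lemma S1 : S 1 = 1.
Proof.
have := sep2 D1 bilin_Sm; rewrite antiL eps1 big_cons big_nil addr0 mulr1 /=.
by move=> <-; rewrite scale1r.
Qed.

Lemma linV_sumf (W : lmodType C) I (l : seq I) (F : I -> H -> W) :
  (forall i, linV (F i)) -> linV (fun a => \sum_(i <- l) F i a).
Proof.
move=> lF a x y; rewrite scaler_sumr -big_split /=.
by apply: eq_bigr => i _; rewrite lF.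
Qed.

Lemma epsepsX a b X : (eps a * eps b) *: X =
  \sum_(r <- D a) \sum_(t <- D b) X * r.1 * t.1 * S t.2 * S r.2.
Proof.
transitivity (\sum_(r <- D a) X * r.1 * (\sum_(t <- D b) t.1 * S t.2) * S r.2); last first.
  apply: eq_bigr => r _; rewrite mulr_sumr mulr_suml; apply: eq_bigr => t _.
  by rewrite !mulrA.
rewrite antiR; under eq_bigr do rewrite mulr_algr -!scalerAl.
rewrite -scaler_sumr.
transitivity (eps b *: (X * \sum_(r <- D a) r.1 * S r.2)); last first.
  by rewrite mulr_sumr; congr (_ *: _); apply: eq_bigr => r _; rewrite mulrA.
by rewrite antiR mulr_algr scalerA mulrC.
Qed.

Lemma Sm_sum a b : \sum_(r <- D a) \sum_(t <- D b) S (r.1 * t.1) * (r.2 * t.2) =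
  (eps a * eps b)%:A.
Proof.
transitivity (\sum_(m <- mul2 (D a) (D b)) S m.1 * m.2).
  by rewrite /mul2 big_allpairs_dep.
by rewrite -(sep2 (Dmul a b) bilin_Sm) antiL epsM.
Qed.

Ltac lin_norm := rewrite ?(mulrDl, mulrDr); do 2 (rewrite -?scalerAr -?scalerAl);
  rewrite ?SL; rewrite ?(mulrDl, mulrDr); do 3 (rewrite -?scalerAr -?scalerAl).

Lemma SM u v : S (u * v) = S v * S u.
Proof.
pose F3 (P Q : H * H * H) := S (P.1.1 * Q.1.1) * P.1.2 * Q.1.2 * S Q.2 * S P.2.
have -> : u * v = \sum_(p <- D u) \sum_(q <- D v) (eps p.2 * eps q.2) *: (p.1 * q.1).
  rewrite -{1}[u](proj2 (counit u)) -{1}[v](proj2 (counit v)) /id_eps mulr_suml.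
  apply: eq_bigr => p _; rewrite mulr_sumr; apply: eq_bigr => q _.
  by rewrite -scalerAl -scalerAr scalerA.
rewrite linV_sum //; under eq_bigr do rewrite linV_sum //.
under eq_bigr do under eq_bigr do rewrite linVZ // epsepsX.
transitivity (\sum_(P <- id_D D (D u)) \sum_(Q <- id_D D (D v)) F3 P Q).
  rewrite /id_D big_allpairs_dep; apply: eq_bigr => p _.
  rewrite exchange_big; apply: eq_bigr => r _.
  by rewrite big_allpairs_dep.
have lin1 : forall (l : seq (H * H * H)), trilin (fun a b c => \sum_(Q <- l) F3 (a, b, c) Q).
  move=> l; split=> [b c|a c|a b]; apply: linV_sumf => Q x y z; rewrite /F3 /=.
  - by lin_norm.
  - by lin_norm.
  - by lin_norm.
have lin2 : forall P, trilin (fun a b c => F3 P (a, b, c)).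
  move=> P; split=> [b c|a c|a b] x y z; rewrite /F3 /=.
  - by lin_norm.
  - by lin_norm.
  - by lin_norm.
transitivity (\sum_(P <- D_id D (D u)) \sum_(Q <- id_D D (D v)) F3 P Q).
  by rewrite -(sep3 (coass u) (lin1 _)).
transitivity (\sum_(P <- D_id D (D u)) \sum_(Q <- D_id D (D v)) F3 P Q).
  by apply: eq_bigr => P _; rewrite -(sep3 (coass v) (lin2 P)).
rewrite /D_id big_allpairs_dep.
transitivity (\sum_(p <- D u) \sum_(q <- D v) (eps p.1 * eps q.1)%:A * (S q.2 * S p.2)).
  apply: eq_bigr => p _; under eq_bigr do rewrite big_allpairs_dep.
  rewrite exchange_big; apply: eq_bigr => q _.
  rewrite -Sm_sum mulr_suml; apply: eq_bigr => r _.
  rewrite mulr_suml; apply: eq_bigr => t _.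
  by rewrite /F3 /= !mulrA.
rewrite -{2}[v](proj1 (counit v)) -{2}[u](proj1 (counit u)) /eps_id.
rewrite !(@linV_sum _ _ S) // mulr_sumr; apply: eq_bigr => p _; rewrite mulr_suml.
apply: eq_bigr => q _; rewrite !(@linVZ _ _ S) // mulr_algl -scalerAr -scalerAl scalerA.
by [].
Qed.
End Hopf.


Section Delta.
Variables (gT : finType) (V : nmodType).
Lemma sumd (F : gT -> V) a : \sum_z (if a == z then F z else 0) = F a.
Proof.
rewrite (bigD1 a) //= eqxx big1 ?addr0 // => z /negbTE.
by rewrite eq_sym => ->.
Qed.
Lemma sumd' (F : gT -> V) a : \sum_z (if z == a then F z else 0) = F a.
Proof. by rewrite -[RHS](sumd F a); apply: eq_bigr => z _; rewrite eq_sym. Qed.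
End Delta.

Section Grp.
Variables (H : algType C) (D : H -> T2 H) (eps : H -> C) (S : H -> H).
Hypothesis Dlin : forall a u v, teq2 (D (a *: u + v)) (scale2 a (D u) ++ D v).
Hypothesis Dmul : forall u v, teq2 (D (u * v)) (mul2 (D u) (D v)).
Hypothesis D1 : teq2 (D 1) (one2 H).
Hypothesis epsL : forall a u v, eps (a *: u + v) = a * eps u + eps v.
Hypothesis epsM : forall u v, eps (u * v) = eps u * eps v.
Hypothesis eps1 : eps 1 = 1.
Hypothesis counit : forall h, eps_id eps (D h) = h /\ id_eps eps (D h) = h.
Hypothesis SL : forall (a : C) u v, S (a *: u + v) = a *: S u + S v.
Hypothesis antiL : forall h, \sum_(p <- D h) S p.1 * p.2 = (eps h)%:A.
Hypothesis antiR : forall h, \sum_(p <- D h) p.1 * S p.2 = (eps h)%:A.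
Hypothesis coass : forall h, teq3 (D_id D (D h)) (id_D D (D h)).

Variables (gT : finGroupType) (iota : gT -> H) (j : gT -> gT -> C).
Hypothesis hG : central_grouplike_subgroup D iota.
Hypothesis hj : char_iso j.

Local Notation E := (idem iota j).
Local Notation NG := (NG gT).

Lemma iota1 : iota 1%g = 1. Proof. by case: hG. Qed.
Lemma iotaM x y : iota (x * y)%g = iota x * iota y. Proof. by case: hG. Qed.
Lemma iotaD x : teq2 (D (iota x)) [:: (iota x, iota x)].
Proof. by case: hG => _ _ _ gl _; case: (gl x). Qed.
Lemma iotaC x h : iota x * h = h * iota x. Proof. by case: hG. Qed.

Lemma eps_iota x : eps (iota x) = 1.
Proof.
have e2 : eps (iota x) = eps (iota x) * eps (iota x).
  have := iotaD x (epsC epsL) (epsC epsL); rewrite /ev2 big_cons big_nil addr0 /= => <-.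
  rewrite -{1}[iota x](proj1 (counit (iota x))) /eps_id linC_sum; last exact: epsC.
  by apply: eq_bigr => p _; rewrite (linCZ _ _ (epsC epsL)).
have nz : eps (iota x) != 0.
  apply/eqP => e0; have := epsM (iota x) (iota x^-1); rewrite -iotaM mulgV iota1 eps1 e0 mul0r.
  by move/eqP; rewrite oner_eq0.
by apply: (mulfI nz); rewrite -e2 mulr1.
Qed.

Lemma S_iota x : S (iota x) = iota x^-1.
Proof.
have := sep2 (iotaD x) (bilin_Sm SL); rewrite antiL eps_iota big_cons big_nil addr0 /=.
move=> E1; rewrite -[S _]mulr1 -iota1 -(mulgV x) iotaM mulrA -E1.
by rewrite scale1r mul1r.
Qed.

Lemma iota_E y x : iota y * E x = j y x *: E x.
Proof.
rewrite /idem -scalerAr mulr_sumr scalerA mulrC -scalerA; congr (_ *: _).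
rewrite scaler_sumr [RHS](reindex_inj (mulgI y)) /=; apply: eq_bigr => z _.
by rewrite -scalerAr -iotaM scalerA (jMl hj) invfM mulrA mulfV ?mul1r // (jnz hj).
Qed.

Lemma E_mul x' x : E x' * E x = if x' == x then E x else 0.
Proof.
rewrite {1}/idem -scalerAl mulr_suml.
under eq_bigr do rewrite -scalerAl iota_E scalerA.
rewrite -scaler_suml scalerA (orth_col hj).
by case: eqP => _; rewrite ?mulr0 ?scale0r // mulVf ?scale1r // NG_neq0.
Qed.

Lemma E_central x h : E x * h = h * E x.
Proof.
rewrite /idem -scalerAl -scalerAr mulr_suml mulr_sumr; congr (_ *: _).
by apply: eq_bigr => y _; rewrite -scalerAl -scalerAr iotaC.
Qed.

Lemma E_sum : \sum_x E x = 1.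
Proof.
rewrite /idem -scaler_sumr exchange_big /=.
under eq_bigr do rewrite -scaler_suml.
rewrite (eq_bigr (fun y => if y == 1%g then NG *: iota y else 0)); last first.
  move=> y _; under eq_bigr do rewrite -(jVl hj).
  by rewrite (row_sum hj) invg_eq1; case: eqP => _; rewrite ?scale0r.
by rewrite sumd' scalerA mulVf ?scale1r ?iota1 // NG_neq0.
Qed.

Lemma E_eps x : eps (E x) = (x == 1%g)%:R.
Proof.
have le := epsC epsL.
rewrite /idem (linCZ _ _ le) (linC_sum _ _ le).
under eq_bigr => y _ do rewrite (linCZ _ _ le) eps_iota -(jx1 hj y).
by rewrite (orth_col hj); case: eqP => _; rewrite ?mulr0 // mulVf // NG_neq0.
Qed.

Lemma E_S x : S (E x) = E x^-1.
Proof.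
have lS := SV SL.
rewrite /idem (linVZ _ _ lS) (linV_sum _ _ lS); congr (_ *: _).
rewrite [LHS](reindex_inj invg_inj) /=; apply: eq_bigr => y _.
by rewrite (linVZ _ _ lS) S_iota invgK (jVl hj) (jV hj).
Qed.

Lemma iota_e y : iota y = \sum_x j y x *: E x.
Proof.
rewrite /idem; under eq_bigr do rewrite scalerA mulrC -scalerA scaler_sumr.
rewrite -scaler_sumr exchange_big /=.
under eq_bigr do under eq_bigr do rewrite scalerA.
under eq_bigr do rewrite -scaler_suml (orth_row hj).
rewrite (eq_bigr (fun z => if y == z then NG *: iota z else 0)); last first.
  by move=> z _; case: eqP => _; rewrite ?scale0r.
by rewrite sumd scalerA mulVf ?scale1r // NG_neq0.
Qed.

Lemma E_D f g x : lin_fun f -> lin_fun g ->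
  ev2 f g (D (E x)) = \sum_a \sum_b (if x == (a * b)%g then f (E a) * g (E b) else 0).
Proof.
move=> lf lg; have lD := evD_lin Dlin lf lg.
have fi : forall (k : H -> C), lin_fun k -> forall y, k (iota y) = \sum_a j y a * k (E a).
  move=> k lk y; rewrite iota_e (linC_sum _ _ lk).
  by apply: eq_bigr => a _; rewrite (linCZ _ _ lk).
rewrite /idem (linCZ _ _ lD) (linC_sum _ _ lD).
under eq_bigr => y _ do rewrite (linCZ _ _ lD) /= (iotaD y lf lg) /ev2 big_cons big_nil addr0 /=.
transitivity (\sum_y \sum_a \sum_b
   NG^-1 * (j y x)^-1 * j y a * j y b * (f (E a) * g (E b))).
  rewrite mulr_sumr; apply: eq_bigr => y _.
  rewrite (fi f lf) (fi g lg) mulr_suml !mulr_sumr; apply: eq_bigr => a _.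
  rewrite mulr_sumr !mulr_sumr; apply: eq_bigr => b _.
  ring.
rewrite exchange_big; apply: eq_bigr => a _.
rewrite exchange_big; apply: eq_bigr => b _.
transitivity (NG^-1 * (\sum_y (j y x)^-1 * j y (a * b)%g) * (f (E a) * g (E b))).
  rewrite mulr_sumr mulr_suml; apply: eq_bigr => y _.
  rewrite (jM hj); ring.
rewrite (orth_col hj); case: eqP => _; rewrite ?mulr0 ?mul0r //.
by rewrite mulVf ?mul1r // NG_neq0.
Qed.

Definition rep2 (s : T2 H) (c : gT -> gT -> C) := forall f g, lin_fun f -> lin_fun g ->
  ev2 f g s = \sum_x \sum_y c x y * (f (E x) * g (E y)).
Definition rep3 (s : T3 H) (c : gT -> gT -> gT -> C) :=
  forall f g k, lin_fun f -> lin_fun g -> lin_fun k ->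
  ev3 f g k s = \sum_x \sum_y \sum_z c x y z * (f (E x) * g (E y) * k (E z)).
Definition rep4 (s : T4 H) (c : gT -> gT -> gT -> gT -> C) :=
  forall f g k l, lin_fun f -> lin_fun g -> lin_fun k -> lin_fun l ->
  ev4 f g k l s = \sum_x \sum_y \sum_z \sum_t
     c x y z t * (f (E x) * g (E y) * k (E z) * l (E t)).

Definition L2 (c : gT -> gT -> C) : T2 H :=
  flatten [seq [seq (c x y *: E x, E y) | y <- enum gT] | x <- enum gT].
Definition L3 (c : gT -> gT -> gT -> C) : T3 H :=
  flatten [seq [seq (c x y z *: E x, E y, E z) | y <- enum gT, z <- enum gT] | x <- enum gT].

Lemma sumE (V : nmodType) (F : gT -> V) : \sum_(x <- enum gT) F x = \sum_x F x.
Proof. by rewrite big_enum. Qed.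

Lemma sum_only (V : nmodType) (G : gT -> V) x0 :
  (forall x, x != x0 -> G x = 0) -> \sum_x G x = G x0.
Proof. by move=> G0; rewrite (bigD1 x0) //= big1 ?addr0 // => x /G0. Qed.

Lemma lin_mull (f : H -> C) a : lin_fun f -> lin_fun (fun h => f (a * h)).
Proof. by move=> lf b u v /=; rewrite mulrDr -scalerAr lf. Qed.
Lemma lin_mulr (f : H -> C) a : lin_fun f -> lin_fun (fun h => f (h * a)).
Proof. by move=> lf b u v /=; rewrite mulrDl -scalerAl lf. Qed.

Lemma fEE (f : H -> C) x : lin_fun f -> f (E x * E x) = f (E x).
Proof. by move=> lf; rewrite E_mul eqxx. Qed.
Lemma fE0 (f : H -> C) x y : lin_fun f -> x != y -> f (E x * E y) = 0.
Proof. by move=> lf /negbTE nxy; rewrite E_mul nxy (linC0 lf). Qed.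

Lemma fsum (f : H -> C) : lin_fun f -> f 1 = \sum_x f (E x).
Proof. by move=> lf; rewrite -E_sum (linC_sum _ _ lf). Qed.

Lemma rep2_L2 c : rep2 (L2 c) c.
Proof.
move=> f g lf lg; rewrite /ev2 /L2 big_flatten /= big_map sumE.
apply: eq_bigr => x _; rewrite big_map sumE; apply: eq_bigr => y _ /=.
by rewrite (linCZ _ _ lf) mulrA.
Qed.

Lemma rep3_L3 c : rep3 (L3 c) c.
Proof.
move=> f g k lf lg lk; rewrite /ev3 /L3 big_flatten /= big_map sumE.
apply: eq_bigr => x _; rewrite big_allpairs_dep sumE; apply: eq_bigr => y _.
rewrite sumE; apply: eq_bigr => z _ /=.
by rewrite (linCZ _ _ lf) !mulrA.
Qed.

Lemma rep2_one : rep2 (one2 H) (fun _ _ => 1).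
Proof.
move=> f g lf lg; rewrite /ev2 big_cons big_nil addr0 /= (fsum lf) (fsum lg).
rewrite mulr_suml; apply: eq_bigr => x _; rewrite mulr_sumr.
by apply: eq_bigr => y _; rewrite mul1r.
Qed.

Lemma rep3_one : rep3 (one3 H) (fun _ _ _ => 1).
Proof.
move=> f g k lf lg lk; rewrite /ev3 big_cons big_nil addr0 /= (fsum lf) (fsum lg) (fsum lk).
rewrite -mulrA mulr_suml; apply: eq_bigr => x _; rewrite mulr_suml mulr_sumr.
apply: eq_bigr => y _; rewrite !mulr_sumr; apply: eq_bigr => z _.
by rewrite mul1r !mulrA.
Qed.

Lemma rep2_mul s t c d : rep2 s c -> rep2 t d ->
  rep2 (mul2 s t) (fun x y => c x y * d x y).
Proof.
move=> Hs Ht f g lf lg; rewrite /ev2 /mul2 big_allpairs_dep /=.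
transitivity (\sum_(p <- s) \sum_x' \sum_y' d x' y' * (f (p.1 * E x') * g (p.2 * E y'))).
  by apply: eq_bigr => p _; exact: (Ht _ _ (lin_mull p.1 lf) (lin_mull p.2 lg)).
rewrite exchange_big; apply: eq_bigr => x' _; rewrite exchange_big; apply: eq_bigr => y' _.
rewrite -mulr_sumr.
have -> : \sum_(p <- s) f (p.1 * E x') * g (p.2 * E y') =
    \sum_x \sum_y c x y * (f (E x * E x') * g (E y * E y')).
  exact: (Hs _ _ (lin_mulr (E x') lf) (lin_mulr (E y') lg)).
rewrite (@sum_only _ _ x') => [|x nx]; last first.
  by apply: big1 => y _; rewrite (fE0 lf nx) mul0r mulr0.
rewrite (@sum_only _ _ y') => [|y ny]; last by rewrite (fE0 lg ny) mulr0 mulr0.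
by rewrite (fEE _ lf) (fEE _ lg) mulrA [d x' y' * _]mulrC.
Qed.

Lemma rep3_mul s t c d : rep3 s c -> rep3 t d ->
  rep3 (mul3 s t) (fun x y z => c x y z * d x y z).
Proof.
move=> Hs Ht f g k lf lg lk; rewrite /ev3 /mul3 big_allpairs_dep /=.
transitivity (\sum_(p <- s) \sum_x' \sum_y' \sum_z' d x' y' z' *
   (f (p.1.1 * E x') * g (p.1.2 * E y') * k (p.2 * E z'))).
  by apply: eq_bigr => p _; exact: (Ht _ _ _ (lin_mull p.1.1 lf) (lin_mull p.1.2 lg) (lin_mull p.2 lk)).
rewrite exchange_big; apply: eq_bigr => x' _; rewrite exchange_big; apply: eq_bigr => y' _.
rewrite exchange_big; apply: eq_bigr => z' _.
rewrite -mulr_sumr.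
have -> : \sum_(p <- s) f (p.1.1 * E x') * g (p.1.2 * E y') * k (p.2 * E z') =
    \sum_x \sum_y \sum_z c x y z * (f (E x * E x') * g (E y * E y') * k (E z * E z')).
  exact: (Hs _ _ _ (lin_mulr (E x') lf) (lin_mulr (E y') lg) (lin_mulr (E z') lk)).
rewrite (@sum_only _ _ x') => [|x nx]; last first.
  by apply: big1 => y _; apply: big1 => z _; rewrite (fE0 lf nx) !mul0r mulr0.
rewrite (@sum_only _ _ y') => [|y ny]; last first.
  by apply: big1 => z _; rewrite (fE0 lg ny) mulr0 !mul0r mulr0.
rewrite (@sum_only _ _ z') => [|z nz]; last by rewrite (fE0 lk nz) !mulr0.
by rewrite (fEE _ lf) (fEE _ lg) (fEE _ lk) mulrA [d x' y' z' * _]mulrC.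
Qed.

Lemma rep4_mul s t c d : rep4 s c -> rep4 t d ->
  rep4 (mul4 s t) (fun x y z u => c x y z u * d x y z u).
Proof.
move=> Hs Ht f g k l lf lg lk ll; rewrite /ev4 /mul4 big_allpairs_dep /=.
transitivity (\sum_(p <- s) \sum_x' \sum_y' \sum_z' \sum_u' d x' y' z' u' *
   (f (p.1.1.1 * E x') * g (p.1.1.2 * E y') * k (p.1.2 * E z') * l (p.2 * E u'))).
  apply: eq_bigr => p _.
  exact: (Ht _ _ _ _ (lin_mull p.1.1.1 lf) (lin_mull p.1.1.2 lg) (lin_mull p.1.2 lk) (lin_mull p.2 ll)).
rewrite exchange_big; apply: eq_bigr => x' _; rewrite exchange_big; apply: eq_bigr => y' _.
rewrite exchange_big; apply: eq_bigr => z' _; rewrite exchange_big; apply: eq_bigr => u' _.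
rewrite -mulr_sumr.
have -> : \sum_(p <- s) f (p.1.1.1 * E x') * g (p.1.1.2 * E y') * k (p.1.2 * E z') * l (p.2 * E u') =
    \sum_x \sum_y \sum_z \sum_u c x y z u *
      (f (E x * E x') * g (E y * E y') * k (E z * E z') * l (E u * E u')).
  exact: (Hs _ _ _ _ (lin_mulr (E x') lf) (lin_mulr (E y') lg) (lin_mulr (E z') lk) (lin_mulr (E u') ll)).
rewrite (@sum_only _ _ x') => [|x nx]; last first.
  by apply: big1 => y _; apply: big1 => z _; apply: big1 => u _; rewrite (fE0 lf nx) !mul0r mulr0.
rewrite (@sum_only _ _ y') => [|y ny]; last first.
  by apply: big1 => z _; apply: big1 => u _; rewrite (fE0 lg ny) mulr0 !mul0r mulr0.
rewrite (@sum_only _ _ z') => [|z nz]; last first.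
  by apply: big1 => u _; rewrite (fE0 lk nz) mulr0 !mul0r mulr0.
rewrite (@sum_only _ _ u') => [|u nu]; last by rewrite (fE0 ll nu) !mulr0.
by rewrite (fEE _ lf) (fEE _ lg) (fEE _ lk) (fEE _ ll) mulrA [d x' y' z' u' * _]mulrC.
Qed.

Lemma ex1 (I J : Type) (r1 : seq I) (r2 : seq J) (F : I -> J -> C) :
  \sum_(i <- r1) \sum_(j <- r2) F i j = \sum_(j <- r2) \sum_(i <- r1) F i j.
Proof. exact: exchange_big. Qed.
Lemma ex2 (I J K : Type) (r1 : seq I) (r2 : seq J) (r3 : seq K) (F : I -> J -> K -> C) :
  \sum_(i <- r1) \sum_(j <- r2) \sum_(k <- r3) F i j k =
  \sum_(k <- r3) \sum_(i <- r1) \sum_(j <- r2) F i j k.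
Proof. by under eq_bigr do rewrite exchange_big; rewrite exchange_big. Qed.
Lemma ex3 (I J K L : Type) (r1 : seq I) (r2 : seq J) (r3 : seq K) (r4 : seq L)
  (F : I -> J -> K -> L -> C) :
  \sum_(i <- r1) \sum_(j <- r2) \sum_(k <- r3) \sum_(l <- r4) F i j k l =
  \sum_(l <- r4) \sum_(i <- r1) \sum_(j <- r2) \sum_(k <- r3) F i j k l.
Proof. by under eq_bigr do rewrite ex2; rewrite exchange_big. Qed.

Lemma E_D' f g (lf : lin_fun f) (lg : lin_fun g) X :
  ev2 f g (D (E X)) = \sum_a f (E a) * g (E (a^-1 * X)%g).
Proof.
rewrite (E_D _ lf lg); apply: eq_bigr => a _.
rewrite -[RHS](sumd' (fun b => f (E a) * g (E b)) (a^-1 * X)%g).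
apply: eq_bigr => b _; congr (if _ then _ else _).
by apply/eqP/eqP => ->; rewrite ?mulKg ?mulKVg.
Qed.

Lemma reidx (G : gT -> C) a : \sum_y G y = \sum_Y G (a^-1 * Y)%g.
Proof. exact: (reindex_inj (mulgI a^-1%g)). Qed.

Lemma rep3_D_id s c : rep2 s c -> rep3 (D_id D s) (fun x y z => c (x * y)%g z).
Proof.
move=> Hs f g k lf lg lk; have lD := evD_lin Dlin lf lg.
transitivity (ev2 (fun u => ev2 f g (D u)) k s).
  rewrite /ev3 /D_id big_allpairs_dep /ev2; apply: eq_bigr => p _.
  by rewrite mulr_suml.
rewrite (Hs _ _ lD lk) /=.
under eq_bigr do under eq_bigr do rewrite (E_D' lf lg) !mulr_suml mulr_sumr.
rewrite ex2; apply: eq_bigr => a _; rewrite [RHS](reidx _ a).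
apply: eq_bigr => X _; apply: eq_bigr => z _; rewrite mulKVg; ring.
Qed.

Lemma rep3_id_D s c : rep2 s c -> rep3 (id_D D s) (fun x y z => c x (y * z)%g).
Proof.
move=> Hs f g k lf lg lk; have lD := evD_lin Dlin lg lk.
transitivity (ev2 f (fun u => ev2 g k (D u)) s).
  rewrite /ev3 /id_D big_allpairs_dep /ev2; apply: eq_bigr => p _.
  by rewrite mulr_sumr; apply: eq_bigr => q _; rewrite mulrA.
rewrite (Hs _ _ lf lD) /=; apply: eq_bigr => x _.
under eq_bigr do rewrite (E_D' lg lk) !mulr_sumr.
rewrite ex1; apply: eq_bigr => a _; rewrite [RHS](reidx _ a).
apply: eq_bigr => X _; rewrite mulKVg; ring.
Qed.

Lemma rep4_D_id_id s c : rep3 s c -> rep4 (D_id_id D s) (fun x y z t => c (x * y)%g z t).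
Proof.
move=> Hs f g k l lf lg lk ll; have lD := evD_lin Dlin lf lg.
transitivity (ev3 (fun u => ev2 f g (D u)) k l s).
  rewrite /ev4 /D_id_id big_allpairs_dep /ev3 /ev2; apply: eq_bigr => p _.
  by rewrite !mulr_suml.
rewrite (Hs _ _ _ lD lk ll) /=.
under eq_bigr do under eq_bigr do under eq_bigr do rewrite (E_D' lf lg) !mulr_suml mulr_sumr.
rewrite ex3; apply: eq_bigr => a _; rewrite [RHS](reidx _ a).
apply: eq_bigr => X _; apply: eq_bigr => z _; apply: eq_bigr => t _; rewrite mulKVg; ring.
Qed.

Lemma rep4_id_D_id s c : rep3 s c -> rep4 (id_D_id D s) (fun x y z t => c x (y * z)%g t).
Proof.
move=> Hs f g k l lf lg lk ll; have lD := evD_lin Dlin lg lk.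
transitivity (ev3 f (fun u => ev2 g k (D u)) l s).
  rewrite /ev4 /id_D_id big_allpairs_dep /ev3 /ev2; apply: eq_bigr => p _.
  by rewrite mulr_sumr mulr_suml; apply: eq_bigr => q _; rewrite !mulrA.
rewrite (Hs _ _ _ lf lD ll) /=; apply: eq_bigr => x _.
under eq_bigr do under eq_bigr do rewrite (E_D' lg lk) mulr_sumr !mulr_suml mulr_sumr.
rewrite ex2; apply: eq_bigr => a _; rewrite [RHS](reidx _ a).
apply: eq_bigr => X _; apply: eq_bigr => t _; rewrite mulKVg; ring.
Qed.

Lemma rep4_id_id_D s c : rep3 s c -> rep4 (id_id_D D s) (fun x y z t => c x y (z * t)%g).
Proof.
move=> Hs f g k l lf lg lk ll; have lD := evD_lin Dlin lk ll.
transitivity (ev3 f g (fun u => ev2 k l (D u)) s).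
  rewrite /ev4 /id_id_D big_allpairs_dep /ev3 /ev2; apply: eq_bigr => p _.
  by rewrite mulr_sumr; apply: eq_bigr => q _; rewrite !mulrA.
rewrite (Hs _ _ _ lf lg lD) /=; apply: eq_bigr => x _; apply: eq_bigr => y _.
under eq_bigr do rewrite (E_D' lk ll) !mulr_sumr.
rewrite ex1; apply: eq_bigr => a _; rewrite [RHS](reidx _ a).
apply: eq_bigr => X _; rewrite mulKVg; ring.
Qed.

Lemma rep3_one_t2 s c : rep2 s c -> rep3 (one_t2 s) (fun x y z => c y z).
Proof.
move=> Hs f g k lf lg lk.
transitivity (f 1 * ev2 g k s).
  by rewrite /ev3 /one_t2 big_map /ev2 mulr_sumr; apply: eq_bigr => p _; rewrite mulrA.
rewrite (Hs _ _ lg lk) (fsum lf) mulr_suml; apply: eq_bigr => x _.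
rewrite mulr_sumr; apply: eq_bigr => y _; rewrite mulr_sumr; apply: eq_bigr => z _.
ring.
Qed.

Lemma rep3_t2_one s c : rep2 s c -> rep3 (t2_one s) (fun x y z => c x y).
Proof.
move=> Hs f g k lf lg lk.
transitivity (ev2 f g s * k 1).
  by rewrite /ev3 /t2_one big_map /ev2 mulr_suml.
rewrite (Hs _ _ lf lg) (fsum lk) mulr_suml; apply: eq_bigr => x _.
rewrite mulr_suml; apply: eq_bigr => y _; rewrite mulr_sumr; apply: eq_bigr => z _.
ring.
Qed.

Lemma rep4_one_t3 s c : rep3 s c -> rep4 (one_t3 s) (fun x y z t => c y z t).
Proof.
move=> Hs f g k l lf lg lk ll.
transitivity (f 1 * ev3 g k l s).
  by rewrite /ev4 /one_t3 big_map /ev3 mulr_sumr; apply: eq_bigr => p _; rewrite !mulrA.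
rewrite (Hs _ _ _ lg lk ll) (fsum lf) mulr_suml; apply: eq_bigr => x _.
rewrite mulr_sumr; apply: eq_bigr => y _; rewrite mulr_sumr; apply: eq_bigr => z _.
rewrite mulr_sumr; apply: eq_bigr => t _.
ring.
Qed.

Lemma rep4_t3_one s c : rep3 s c -> rep4 (t3_one s) (fun x y z t => c x y z).
Proof.
move=> Hs f g k l lf lg lk ll.
transitivity (ev3 f g k s * l 1).
  by rewrite /ev4 /t3_one big_map /ev3 mulr_suml.
rewrite (Hs _ _ _ lf lg lk) (fsum ll) mulr_suml; apply: eq_bigr => x _.
rewrite mulr_suml; apply: eq_bigr => y _; rewrite mulr_suml; apply: eq_bigr => z _.
rewrite mulr_sumr; apply: eq_bigr => t _.
ring.
Qed.

Lemma rep2_id_eps_id s c : rep3 s c -> rep2 (id_eps_id eps s) (fun x z => c x 1%g z).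
Proof.
move=> Hs f g lf lg; have le := epsC epsL.
transitivity (ev3 f eps g s).
  rewrite /ev2 /id_eps_id big_map /ev3; apply: eq_bigr => p _ /=.
  by rewrite (linCZ _ _ lf); ring.
rewrite (Hs _ _ _ lf le lg); apply: eq_bigr => x _.
rewrite (@sum_only _ _ 1%g) => [|y ny]; last first.
  by apply: big1 => z _; rewrite E_eps (negbTE ny) mulr0 mul0r mulr0.
by apply: eq_bigr => z _; rewrite E_eps eqxx mulr1.
Qed.

Lemma rep2_teq s t c c' : rep2 s c -> rep2 t c' -> (forall x y, c x y = c' x y) -> teq2 s t.
Proof.
move=> Hs Ht E f g lf lg; rewrite (Hs _ _ lf lg) (Ht _ _ lf lg).
by apply: eq_bigr => x _; apply: eq_bigr => y _; rewrite E.
Qed.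
Lemma rep3_teq s t c c' : rep3 s c -> rep3 t c' -> (forall x y z, c x y z = c' x y z) ->
  teq3 s t.
Proof.
move=> Hs Ht E f g k lf lg lk; rewrite (Hs _ _ _ lf lg lk) (Ht _ _ _ lf lg lk).
by apply: eq_bigr => x _; apply: eq_bigr => y _; apply: eq_bigr => z _; rewrite E.
Qed.
Lemma rep4_teq s t c c' : rep4 s c -> rep4 t c' ->
  (forall x y z u, c x y z u = c' x y z u) -> teq4 s t.
Proof.
move=> Hs Ht E f g k l lf lg lk ll; rewrite (Hs _ _ _ _ lf lg lk ll) (Ht _ _ _ _ lf lg lk ll).
by apply: eq_bigr => x _; apply: eq_bigr => y _; apply: eq_bigr => z _;
  apply: eq_bigr => u _; rewrite E.
Qed.

Lemma L2_sum (V : nmodType) (F : H * H -> V) c :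
  \sum_(p <- L2 c) F p = \sum_x \sum_y F (c x y *: E x, E y).
Proof.
rewrite /L2 big_flatten /= big_map sumE; apply: eq_bigr => x _.
by rewrite big_map sumE.
Qed.

Lemma L3_sum (V : nmodType) (F : H * H * H -> V) c :
  \sum_(p <- L3 c) F p = \sum_x \sum_y \sum_z F (c x y z *: E x, E y, E z).
Proof.
rewrite /L3 big_flatten /= big_map sumE; apply: eq_bigr => x _.
by rewrite big_allpairs_dep sumE; apply: eq_bigr => y _; rewrite sumE.
Qed.

Lemma Lc_central x (a : C) h : (a *: E x) * h = h * (a *: E x).
Proof. by rewrite -scalerAl E_central scalerAr. Qed.

Lemma mul3_congr_r (s t t' : T3 H) : teq3 t t' -> teq3 (mul3 s t) (mul3 s t').
Proof.
move=> tt f g k lf lg lk; rewrite /ev3 /mul3 !big_allpairs_dep; apply: eq_bigr => p _.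
exact: (tt _ _ _ (lin_mull p.1.1 lf) (lin_mull p.1.2 lg) (lin_mull p.2 lk)).
Qed.

Lemma mul3_congr_l (s s' t : T3 H) : teq3 s s' -> teq3 (mul3 s t) (mul3 s' t).
Proof.
move=> ss f g k lf lg lk; rewrite /ev3 /mul3 !big_allpairs_dep exchange_big [RHS]exchange_big.
apply: eq_bigr => q _.
exact: (ss _ _ _ (lin_mulr q.1.1 lf) (lin_mulr q.1.2 lg) (lin_mulr q.2 lk)).
Qed.

Lemma mul3_assoc (a b c : T3 H) : teq3 (mul3 (mul3 a b) c) (mul3 a (mul3 b c)).
Proof.
move=> f g k _ _ _; rewrite /ev3 /mul3 !big_allpairs_dep; apply: eq_bigr => p _.
rewrite big_allpairs_dep; apply: eq_bigr => q _; apply: eq_bigr => r _ /=.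
by rewrite !mulrA.
Qed.

Lemma mul3_one_r (s : T3 H) : teq3 (mul3 s (one3 H)) s.
Proof.
move=> f g k _ _ _; rewrite /ev3 /mul3 big_allpairs_dep; apply: eq_bigr => p _.
by rewrite /one3 big_cons big_nil /= addr0 !mulr1.
Qed.

Lemma mul3_L3_comm c (t : T3 H) : teq3 (mul3 (L3 c) t) (mul3 t (L3 c)).
Proof.
move=> f g k _ _ _; rewrite /ev3 /mul3 !big_allpairs_dep exchange_big.
apply: eq_bigr => q _; rewrite !L3_sum; apply: eq_bigr => x _; apply: eq_bigr => y _.
apply: eq_bigr => z _ /=.
by rewrite Lc_central !E_central.
Qed.

Lemma teq3_trans (s t u : T3 H) : teq3 s t -> teq3 t u -> teq3 s u.
Proof. by move=> st tu f g k lf lg lk; rewrite (st _ _ _ lf lg lk) (tu _ _ _ lf lg lk). Qed.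
Lemma teq3_sym (s t : T3 H) : teq3 s t -> teq3 t s.
Proof. by move=> st f g k lf lg lk; rewrite (st _ _ _ lf lg lk). Qed.

Lemma twistD_eq a b (X : T2 H) : teq2 (mul2 (L2 a) (L2 b)) (one2 H) ->
  teq2 (mul2 (mul2 (L2 a) X) (L2 b)) X.
Proof.
move=> ab f g lf lg; rewrite /ev2 /mul2.
rewrite (big_allpairs_dep (r1 := [seq (p.1 * q.1, p.2 * q.2) | p <- L2 a, q <- X])
   (r2 := fun _ => L2 b)) (big_allpairs_dep (r1 := L2 a) (r2 := fun _ => X)).
rewrite exchange_big; apply: eq_bigr => q _.
have E1 : f q.1 * g q.2 = ev2 (fun h => f (q.1 * h)) (fun h => g (q.2 * h)) (mul2 (L2 a) (L2 b)).
  by rewrite (ab _ _ (lin_mull q.1 lf) (lin_mull q.2 lg)) /ev2 /one2 big_cons big_nil /= addr0 !mulr1.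
rewrite E1 /ev2 /mul2 (big_allpairs_dep (r1 := L2 a) (r2 := fun _ => L2 b)) !(L2_sum _ a).
apply: eq_bigr => x _; apply: eq_bigr => y _; apply: eq_bigr => r _.
by rewrite /= Lc_central E_central !mulrA.
Qed.

Lemma E_sum_l (a : gT -> C) x : E x * (\sum_u a u *: E u) = a x *: E x.
Proof.
rewrite mulr_sumr (@sum_only _ _ x) => [|u nu]; last by rewrite -scalerAr E_mul eq_sym (negbTE nu) scaler0.
by rewrite -scalerAr E_mul eqxx.
Qed.

Lemma Esum_central (a : gT -> C) h : (\sum_u a u *: E u) * h = h * (\sum_u a u *: E u).
Proof. by rewrite mulr_suml mulr_sumr; apply: eq_bigr => u _; rewrite Lc_central. Qed.

Lemma E_mul' x y : E x * E y = (x == y)%:R *: E x.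
Proof. by rewrite E_mul; case: eqP => [->|_]; rewrite ?scale1r ?scale0r. Qed.

Lemma sum_ind1 (V : lmodType C) (F : gT -> C) (v : V) a :
  \sum_y (F y * (a == y)%:R) *: v = F a *: v.
Proof.
rewrite (@sum_only _ _ a) => [|y ny]; first by rewrite eqxx mulr1.
by rewrite eq_sym (negbTE ny) mulr0 scale0r.
Qed.

Lemma scal3 (a b : C) (X Y Z : H) : a *: (b *: X) * Y * Z = (a * b) *: (X * Y * Z).
Proof. by rewrite -!scalerAl scalerA. Qed.
Lemma scal1 (a : C) (X Y : H) : (a *: X) * Y = a *: (X * Y).
Proof. by rewrite -scalerAl. Qed.
Lemma scalr (a : C) (X Y : H) : X * (a *: Y) = a *: (X * Y).
Proof. by rewrite -scalerAr. Qed.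

Section Cocycle.
Variable w : gT -> gT -> gT -> C.
Hypothesis hw : normalized_3cocycle w.

Lemma w_nz x y z : w x y z != 0. Proof. by case: hw. Qed.
Lemma w_cyc x y z t :
  w y z t * w x (y * z)%g t * w x y z = w (x * y)%g z t * w x y (z * t)%g.
Proof. by case: hw. Qed.
Lemma w1l x y : w 1%g x y = 1. Proof. by case: hw => _ _ /(_ x y) []. Qed.
Lemma w1m x y : w x 1%g y = 1. Proof. by case: hw => _ _ /(_ x y) []. Qed.
Lemma w1r x y : w x y 1%g = 1. Proof. by case: hw => _ _ /(_ x y) []. Qed.

Lemma w_inv y : w y^-1%g y y^-1%g * w y y^-1%g y = 1.
Proof.
have := w_cyc y y^-1%g y y^-1%g; rewrite !mulgV !mulVg w1m w1l w1r mulr1 mul1r.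
by move=> ->.
Qed.

Local Notation phi := (L3 (fun x y z => (w x y z)^-1)).
Local Notation psi := (L3 w).
Local Notation beta := (\sum_x w x x^-1%g x *: E x).

Lemma phi_beta_S : \sum_(p <- phi) p.1.1 * beta * S p.1.2 * 1 * p.2 = 1.
Proof.
rewrite L3_sum -[RHS]E_sum; apply: eq_bigr => x _.
transitivity (\sum_y \sum_z ((w x y z)^-1 * w x x^-1%g x * (x == y^-1)%g%:R * (x == z)%:R) *: E x).
  apply: eq_bigr => y _; apply: eq_bigr => z _.
  rewrite /= mulr1 E_S -scalerAl E_sum_l scal3 E_mul' scal1 E_mul' scalerA scalerA.
  by [].
rewrite (@sum_only _ _ x^-1%g) => [|y ny]; last first.
  apply: big1 => z _.
  have -> : (x == y^-1)%g = false by apply/negbTE; apply: contra ny => /eqP ->; rewrite invgK.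
  by rewrite mulr0 mul0r scale0r.
rewrite invgK eqxx (_ : true%:R = 1 :> C) //.
under eq_bigr do rewrite mulr1.
rewrite sum_ind1 mulVf ?scale1r //; exact: w_nz.
Qed.

Lemma L3_inv : teq3 (mul3 phi psi) (one3 H) /\ teq3 (mul3 psi phi) (one3 H).
Proof.
split; apply: (rep3_teq (rep3_mul (rep3_L3 _) (rep3_L3 _)) rep3_one) => x y z /=.
  by rewrite mulVf // w_nz.
by rewrite mulfV // w_nz.
Qed.

Lemma psi_unique p : inverse3 phi p -> teq3 p psi.
Proof.
move=> [_ pphi].
apply: teq3_trans (teq3_sym (mul3_one_r p)) _.
apply: teq3_trans (mul3_congr_r p (teq3_sym (proj1 L3_inv))) _.
apply: teq3_trans (teq3_sym (mul3_assoc _ _ _)) _.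
apply: teq3_trans (mul3_congr_l _ pphi) _.
apply: (rep3_teq (rep3_mul rep3_one (rep3_L3 _)) (rep3_L3 _)) => x y z.
by rewrite mul1r.
Qed.

Ltac lin_norm' := rewrite ?(mulrDl, mulrDr); do 2 (rewrite -?scalerAr -?scalerAl);
  rewrite ?SL; rewrite ?(mulrDl, mulrDr); do 3 (rewrite -?scalerAr -?scalerAl).

Lemma S_psi_beta p : inverse3 phi p ->
  \sum_(q <- p) S q.1.1 * 1 * q.1.2 * beta * S q.2 = 1.
Proof.
move=> ip.
have tl : trilin (fun a b c : H => S a * 1 * b * beta * S c).
  by split=> [b c|a c|a b] x u v; lin_norm'.
rewrite (sep3 (psi_unique ip) tl) L3_sum.
rewrite -[RHS]E_sum [RHS](reindex_inj invg_inj) /=; apply: eq_bigr => x _.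
transitivity (\sum_y \sum_z (w x y z * ((x^-1)%g == y)%:R * w x^-1%g x^-1%g^-1%g x^-1%g
   * ((x^-1)%g == z^-1)%g%:R) *: E x^-1%g).
  apply: eq_bigr => y _; apply: eq_bigr => z _.
  rewrite /= mulr1 (linVZ _ _ (SV SL)) !E_S scal1 E_mul' scal3 E_sum_l scal1 E_mul'.
  by rewrite scalerA scalerA.
rewrite (@sum_only _ _ x^-1%g) => [|y ny]; last first.
  by apply: big1 => z _; rewrite eq_sym (negbTE ny) mulr0 !mul0r scale0r.
rewrite eqxx (_ : true%:R = 1 :> C) // invgK.
under eq_bigr do rewrite mulr1.
rewrite (@sum_only _ _ x) => [|z nz]; last first.
  have -> : (x^-1 == z^-1)%g = false.
    by apply/negbTE; apply: contra nz => /eqP /invg_inj ->.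
  by rewrite mulr0 scale0r.
rewrite eqxx (_ : true%:R = 1 :> C) // mulr1.
by have := w_inv x^-1%g; rewrite invgK => ->; rewrite scale1r.
Qed.

Hypothesis Sbij : bijective S.

Lemma part1 : quasi_hopf D eps (qphi iota j w) 1 (qbeta iota j w) S.
Proof.
change (quasi_hopf D eps phi 1 beta S).
split; split.
- split.
    by split; split.
  split.
  + by exists psi; exact: L3_inv.
  + apply: (rep4_teq (rep4_mul (rep4_mul (rep4_one_t3 (rep3_L3 _)) (rep4_id_D_id (rep3_L3 _)))
       (rep4_t3_one (rep3_L3 _))) (rep4_mul (rep4_id_id_D (rep3_L3 _)) (rep4_D_id_id (rep3_L3 _))))
      => x y z t /=.
    by rewrite -!invfM w_cyc mulrC.
  + apply: (rep2_teq (rep2_id_eps_id (rep3_L3 _)) rep2_one) => x z /=.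
    by rewrite w1m invr1.
  + exact: counit.
  + move=> h; exact: teq3_trans (mul3_congr_r _ (coass h)) (mul3_L3_comm _ _).
- split=> //; first exact: (SM Dmul epsM coass counit SL antiL antiR).
  exact: (S1 D1 eps1 SL antiL).
- by move=> h; under eq_bigr do rewrite mulr1; rewrite antiL.
- move=> h; transitivity (beta * \sum_(p <- D h) p.1 * S p.2).
    by rewrite mulr_sumr; apply: eq_bigr => p _; rewrite -Esum_central mulrA.
  by rewrite antiR mulr_algr.
- exact: phi_beta_S.
- exact: S_psi_beta.
Qed.
End Cocycle.

Lemma rep3_map_id s c : rep3 s c -> rep3 (map3 (fun h : H => h) s) c.
Proof. by move=> Hs f g k lf lg lk; rewrite -(Hs _ _ _ lf lg lk) /ev3 /map3 big_map. Qed.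

Lemma part2 w w' : normalized_3cocycle w -> normalized_3cocycle w' -> cohomologous w w' ->
  gauge_equivalent D eps (qphi iota j w) D eps (qphi iota j w').
Proof.
move=> hw hw' [rho [rnz coh]].
have solve : forall a b : C, a != 0 -> b != 0 -> 1 = (a * a) / (a * b) -> a = b.
  move=> a b an bn E1; apply: (mulfI an).
  by rewrite -[a * b]mul1r E1 divfK // mulf_neq0.
have solve' : forall a b : C, a != 0 -> b != 0 -> 1 = (b * a) / (a * a) -> a = b.
  move=> a b an bn E1; apply: (mulfI an).
  by rewrite -[a * a]mul1r E1 divfK ?mulf_neq0 // mulrC.
have r1l : forall y, rho 1%g y = rho 1%g 1%g.
  move=> y; have := coh 1%g 1%g y; rewrite (w1l hw) (w1l hw') !mul1g mul1r.
  by apply: solve; apply: rnz.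
have r1r : forall x, rho x 1%g = rho 1%g 1%g.
  move=> x; have := coh x 1%g 1%g; rewrite (w1r hw) (w1r hw') !mulg1 mul1r.
  by apply: solve'; apply: rnz.
pose r x y := rho x y / rho 1%g 1%g.
have rnz' : forall x y, r x y != 0 by move=> x y; rewrite mulf_neq0 ?invr_neq0.
have rl : forall y, r 1%g y = 1 by move=> y; rewrite /r r1l mulfV.
have rr : forall x, r x 1%g = 1 by move=> x; rewrite /r r1r mulfV.
have coh' : forall x y z, w' x y z = w x y z * (r y z * r x (y * z)%g) / (r (x * y)%g z * r x y).
  move=> x y z; rewrite coh /r; field.
  by rewrite !rnz.
have ab : teq2 (mul2 (L2 r) (L2 (fun x y => (r x y)^-1))) (one2 H).
  apply: (rep2_teq (rep2_mul (rep2_L2 _) (rep2_L2 _)) rep2_one) => x y /=.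
  by rewrite mulfV.
exists (L2 r), (L2 (fun x y => (r x y)^-1)), (fun h : H => h); split.
  split.
  - split=> //.
    apply: (rep2_teq (rep2_mul (rep2_L2 _) (rep2_L2 _)) rep2_one) => x y /=.
    by rewrite mulVf.
  - rewrite /eps_id L2_sum -[RHS]E_sum exchange_big; apply: eq_bigr => y _.
    rewrite (@sum_only _ _ 1%g) => [|x nx]; last first.
      by rewrite (linCZ _ _ (epsC epsL)) E_eps (negbTE nx) mulr0 scale0r.
    by rewrite (linCZ _ _ (epsC epsL)) E_eps eqxx mulr1 rl scale1r.
  - rewrite /id_eps L2_sum -[RHS]E_sum; apply: eq_bigr => x _.
    rewrite (@sum_only _ _ 1%g) => [|y ny]; last first.
      by rewrite /= E_eps (negbTE ny) scale0r.
    by rewrite /= E_eps eqxx scale1r rr scale1r.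
split; split=> //.
- by exists (fun h : H => h).
- move=> h f g lf lg; rewrite /twist_D (twistD_eq (D h) ab lf lg).
  by rewrite /ev2 /map2 big_map.
- apply: (rep3_teq (rep3_map_id (rep3_L3 _))
    (rep3_mul (rep3_mul (rep3_mul (rep3_mul (rep3_one_t2 (rep2_L2 r)) (rep3_id_D (rep2_L2 r)))
      (rep3_L3 _)) (rep3_D_id (rep2_L2 _))) (rep3_t2_one (rep2_L2 _)))) => x y z /=.
  rewrite coh'; field.
  by rewrite !rnz' (w_nz hw).
Qed.
End Grp.

Unset Implicit Arguments.

Theorem mainTheorem8 (H : algType C) (D : H -> T2 H) (eps : H -> C) (S : H -> H)
  (hH : hopf_algebra D eps S)
  (gT : finGroupType) (iota : gT -> H) (hG : central_grouplike_subgroup D iota)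
  (w : gT -> gT -> gT -> C) (hw : normalized_3cocycle w)
  (j : gT -> gT -> C) (hj : char_iso j) :
  quasi_hopf D eps (qphi iota j w) 1 (qbeta iota j w) S /\
  (forall w' : gT -> gT -> gT -> C, normalized_3cocycle w' -> cohomologous w w' ->
     gauge_equivalent D eps (qphi iota j w) D eps (qphi iota j w')).
Proof.
case: hH => [[[[Dl Dm D1] [eL eM e1]] ca cu] [SL aL aR Sb]].
split; first by apply: part1.
by move=> w' hw' coh; apply: part2.
Qed.
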